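(* Let $Q(u,v)\in\mathbb{Z}[u,v]$ be a quadratic form and let $r\in\mathbb{N}$. Then there are lattices $\Lambda_1,\ldots,\Lambda_N\subseteq\mathbb{Z}^2$ with $N\le 2^{\Omega(r)}$ such that $Q(u,v)\equiv 0\pmod r$ holds for $(u,v)\in\mathbb{Z}^2$ if and only if $(u,v)\in\bigcup_{n=1}^N\Lambda_n$.
   Context: $\Omega(r)$ denotes the number of prime factors of $r$ counted with multiplicity. *)

(* Defs.v *)
From mathcomp Require Import all_boot all_order all_algebra.
Set Implicit Arguments. Unset Strict Implicit. Unset Printing Implicit Defensive.
Import Order.TTheory GRing.Theory Num.Theory.

Definition bigOmega (r : nat) : nat := \sum_(p <- primes r) logn p r.

Definition qform (a b c : int) (u v : int) : int :=
  (a * u ^+ 2 + b * u * v + c * v ^+ 2)%R.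

Definition is_lattice (L : int -> int -> Prop) : Prop :=
  L 0%R 0%R /\
  forall u1 v1 u2 v2, L u1 v1 -> L u2 v2 -> L (u1 - u2)%R (v1 - v2)%R.

(* Main.v *)
Require Import Defs.
From mathcomp Require Import all_boot all_order all_algebra.
From mathcomp Require Import ring zify.
From Stdlib Require List.
Import Order.TTheory GRing.Theory Num.Theory.

Lemma bigOmega_iota n N : (n < N)%N ->
  bigOmega n = \sum_(q <- iota 0 N) logn q n.
Proof.
move=> hN.
have -> : \sum_(q <- iota 0 N) logn q n = \sum_(q <- iota 0 N | q \in primes n) logn q n.
  rewrite [RHS]big_mkcond /=; apply: eq_bigr => q _.
  case: ifP => // hq; rewrite lognE.
  by move: hq; rewrite mem_primes => ->.
rewrite -big_filter /bigOmega.
apply: perm_big; apply: uniq_perm; first exact: primes_uniq.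
  by apply: filter_uniq; apply: iota_uniq.
move=> q; rewrite mem_filter mem_iota /=.
case hq: (q \in primes n) => //=.
move: hq; rewrite mem_primes => /and3P [_ n0 qn].
have := dvdn_leq n0 qn. lia.
Qed.

Lemma bigOmega_mul p m : prime p -> (0 < m)%N -> bigOmega (p * m) = (bigOmega m).+1.
Proof.
move=> pp m0.
have p0 := prime_gt0 pp.
have hpm : (p * m < (p * m).+1)%N by [].
rewrite (@bigOmega_iota _ _ hpm).
rewrite (eq_bigr (fun q => logn q p + logn q m)); last by move=> q _; rewrite lognM.
rewrite big_split /= -(@bigOmega_iota m (p * m).+1); last first.
  have : (1 <= p)%N := p0. nia.
rewrite -(@bigOmega_iota p (p * m).+1); last first.
  nia.
by rewrite /bigOmega primes_prime // big_seq1 logn_prime // eqxx add1n.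
Qed.
Set Implicit Arguments. Unset Strict Implicit. Unset Printing Implicit Defensive.
Local Open Scope ring_scope.

Definition chart := (int * int * int * int)%type.
Definition ap1 (m : chart) (w1 w2 : int) : int := let: (m11, m12, _, _) := m in m11 * w1 + m12 * w2.
Definition ap2 (m : chart) (w1 w2 : int) : int := let: (_, _, m21, m22) := m in m21 * w1 + m22 * w2.
Definition img (m : chart) (L : int -> int -> Prop) (u v : int) : Prop :=
  exists w1 w2, u = ap1 m w1 w2 /\ v = ap2 m w1 w2 /\ L w1 w2.

Lemma img_lattice m L : is_lattice L -> is_lattice (img m L).
Proof.
case: m => [[[m11 m12] m21] m22] [L0 LB]; split.
  by exists 0, 0; rewrite /ap1 /ap2 !mulr0 !addr0.
move=> u1 v1 u2 v2 [x1 [y1 [-> [-> h1]]]] [x2 [y2 [-> [-> h2]]]].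
exists (x1 - x2), (y1 - y2); split; [|split]; last exact: LB.
  rewrite /ap1; ring.
rewrite /ap2; ring.
Qed.

Lemma qform_chart a b c m : exists A B C, forall w1 w2,
  qform a b c (ap1 m w1 w2) (ap2 m w1 w2) = qform A B C w1 w2.
Proof.
case: m => [[[m11 m12] m21] m22].
exists (qform a b c m11 m21), (2 * a * m11 * m12 + b * (m11 * m22 + m12 * m21) + 2 * c * m21 * m22),
  (qform a b c m12 m22) => w1 w2.
rewrite /qform /ap1 /ap2; ring.
Qed.

Lemma coeffs_dvd (P A B C : int) : (forall w1 w2, P %| qform A B C w1 w2)%Z ->
  [/\ (P %| A)%Z, (P %| B)%Z & (P %| C)%Z].
Proof.
move=> h.
have hA : (P %| A)%Z by have := h 1 0; rewrite /qform; congr (_ %| _)%Z; ring.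
have hC : (P %| C)%Z by have := h 0 1; rewrite /qform; congr (_ %| _)%Z; ring.
split => //.
have := h 1 1; have -> : qform A B C 1 1 = B + (A + C) by rewrite /qform; ring.
by rewrite rpredDr // rpredD.
Qed.

Lemma qform_dvd (P A B C u v : int) : (P %| A)%Z -> (P %| B)%Z -> (P %| C)%Z ->
  (P %| qform A B C u v)%Z.
Proof.
move=> hA hB hC; rewrite /qform -!mulrA.
by rewrite !rpredD // dvdz_mulr.
Qed.

Lemma chart_div P a b c m :
  (forall w1 w2, P %| qform a b c (ap1 m w1 w2) (ap2 m w1 w2))%Z ->
  exists A B C, forall w1 w2,
    qform a b c (ap1 m w1 w2) (ap2 m w1 w2) = P * qform A B C w1 w2.
Proof.
have [A [B [C hq]]] := qform_chart a b c m.
move=> h.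
have [hA hB hC] : [/\ (P %| A)%Z, (P %| B)%Z & (P %| C)%Z].
  by apply: coeffs_dvd => w1 w2; rewrite -hq.
exists (A %/ P)%Z, (B %/ P)%Z, (C %/ P)%Z => w1 w2.
rewrite hq -{1}(divzK hA) -{1}(divzK hB) -{1}(divzK hC) /qform; ring.
Qed.

Definition Good (r : nat) (a b c : int) (K : nat) :=
  exists s : seq (int -> int -> Prop), (size s <= K)%N /\
    (forall L, List.In L s -> is_lattice L) /\
    (forall u v, (r%:Z %| qform a b c u v)%Z <-> exists L, List.In L s /\ L u v).

Lemma chart_step (p r' K : nat) a b c m : (0 < p)%N ->
  (forall a b c, Good r' a b c K) ->
  (forall w1 w2, p%:Z %| qform a b c (ap1 m w1 w2) (ap2 m w1 w2))%Z ->
  exists s : seq (int -> int -> Prop), (size s <= K)%N /\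
    (forall L, List.In L s -> is_lattice L) /\
    (forall u v, ((exists w1 w2, u = ap1 m w1 w2 /\ v = ap2 m w1 w2) /\
                   ((p * r')%:Z %| qform a b c u v)%Z) <-> exists L, List.In L s /\ L u v).
Proof.
move=> p0 IH hm.
have [A [B [C hq]]] := @chart_div p%:Z a b c m hm.
have [s [hs [hl hiff]]] := IH A B C.
have pn0 : p%:Z != 0 by rewrite eqz_nat -lt0n.
exists (map (img m) s); split; first by rewrite size_map.
split.
  move=> L /List.in_map_iff [L' [<- hL']]; exact/img_lattice/hl.
move=> u v; split.
  move=> [[w1 [w2 [-> ->]]]]; rewrite hq PoszM dvdz_mul2l //.
  move=> /hiff [L [hL Lw]]; exists (img m L); split; first exact: List.in_map.
  by exists w1, w2.
move=> [L' [/List.in_map_iff [L [<- hL]] [w1 [w2 [-> [-> Lw]]]]]].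
split; first by exists w1, w2.
rewrite hq PoszM dvdz_mul2l //; apply/hiff; by exists L.
Qed.

Lemma charts_step (p r' K : nat) a b c (cs : seq chart) : (0 < p)%N ->
  (forall a b c, Good r' a b c K) ->
  (forall m, List.In m cs -> forall w1 w2, p%:Z %| qform a b c (ap1 m w1 w2) (ap2 m w1 w2))%Z ->
  exists s : seq (int -> int -> Prop), (size s <= size cs * K)%N /\
    (forall L, List.In L s -> is_lattice L) /\
    (forall u v, ((exists m, List.In m cs /\ exists w1 w2, u = ap1 m w1 w2 /\ v = ap2 m w1 w2) /\
                   ((p * r')%:Z %| qform a b c u v)%Z) <-> exists L, List.In L s /\ L u v).
Proof.
move=> p0 IH; elim: cs => [|m cs IHcs] hcs.
  exists [::]; split => //; split => // u v; split.
    by move=> [[m [[] _]] _].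
  by move=> [L [[] _]].
have [s1 [hs1 [hl1 hi1]]] := @chart_step p r' K a b c m p0 IH (hcs m (or_introl erefl)).
have [s2 [hs2 [hl2 hi2]]] := IHcs (fun m' hm' => hcs m' (or_intror hm')).
exists (s1 ++ s2); split.
  by rewrite size_cat mulSn leq_add.
split.
  by move=> L /List.in_app_iff [/hl1|/hl2].
move=> u v; split.
  move=> [[m' [[<-|hm'] hw]] hd].
    have [L [hL Lu]] := (proj1 (hi1 u v)) (conj hw hd).
    by exists L; split => //; apply/List.in_app_iff; left.
  have [L [hL Lu]] := (proj1 (hi2 u v)) (conj (ex_intro _ m' (conj hm' hw)) hd).
  by exists L; split => //; apply/List.in_app_iff; right.
move=> [L [/List.in_app_iff [hL|hL] Lu]].
  have [hw hd] := (proj2 (hi1 u v)) (ex_intro _ L (conj hL Lu)).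
  by split => //; exists m; split => //; left.
have [[m' [hm' hw]] hd] := (proj2 (hi2 u v)) (ex_intro _ L (conj hL Lu)).
by split => //; exists m'; split => //; right.
Qed.
Lemma Euclidz (p : nat) (x y : int) : prime p ->
  (p%:Z %| x * y)%Z = (p%:Z %| x)%Z || (p%:Z %| y)%Z.
Proof. by move=> pp; rewrite !dvdzE abszM absz_nat Euclid_dvdM. Qed.

Lemma coprimez_prime (p : nat) (v : int) : prime p -> ~~ (p%:Z %| v)%Z -> coprimez p%:Z v.
Proof.
move=> pp hv; rewrite /coprimez /gcdz absz_nat eqz_nat; change (coprime p `|v|).
by rewrite prime_coprime // -(absz_nat p) -dvdzE.
Qed.

Lemma nodvd_diff (p i j : nat) : (i < p)%N -> (j < p)%N -> i != j ->
  ~~ (p%:Z %| (i%:Z - j%:Z))%Z.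
Proof.
move=> ip jp ij; rewrite dvdzE absz_nat.
case: (leqP i j) => hij.
  have lij : (i < j)%N by rewrite ltn_neqAle ij hij.
  rewrite distnEr //; apply/negP => /dvdn_leq.
  rewrite subn_gt0 lij => /(_ isT) h.
  by have := leq_trans h (leq_subr i j); rewrite leqNgt jp.
rewrite distnEl; last exact: ltnW.
apply/negP => /dvdn_leq.
rewrite subn_gt0 hij => /(_ isT) h.
by have := leq_trans h (leq_subr j i); rewrite leqNgt ip.
Qed.

Lemma two_roots (p t1 t2 : nat) a b c : prime p -> (t1 < p)%N -> (t2 < p)%N -> t1 != t2 ->
  (p%:Z %| qform a b c t1%:Z 1)%Z -> (p%:Z %| qform a b c t2%:Z 1)%Z ->
  (p%:Z %| a * (t1%:Z + t2%:Z) + b)%Z.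
Proof.
move=> pp h1 h2 h12 r1 r2.
have : (p%:Z %| (t1%:Z - t2%:Z) * (a * (t1%:Z + t2%:Z) + b))%Z.
  have -> : (t1%:Z - t2%:Z) * (a * (t1%:Z + t2%:Z) + b) =
     qform a b c t1%:Z 1 - qform a b c t2%:Z 1 by rewrite /qform; ring.
  by rewrite rpredB.
by rewrite Euclidz // (negbTE (nodvd_diff h1 h2 h12)).
Qed.

Lemma c_of_root (p t : nat) a b c : (p%:Z %| a)%Z -> (p%:Z %| b)%Z ->
  (p%:Z %| qform a b c t%:Z 1)%Z -> (p%:Z %| c)%Z.
Proof.
move=> ha hb hr.
have -> : c = qform a b c t%:Z 1 - (a * (t%:Z * t%:Z) + b * t%:Z) by rewrite /qform; ring.
by rewrite rpredB // rpredD // dvdz_mulr.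
Qed.

Lemma three_roots (p t1 t2 t3 : nat) a b c : prime p -> (t1 < p)%N -> (t2 < p)%N -> (t3 < p)%N ->
  t1 != t2 -> t1 != t3 -> t2 != t3 ->
  (p%:Z %| qform a b c t1%:Z 1)%Z -> (p%:Z %| qform a b c t2%:Z 1)%Z ->
  (p%:Z %| qform a b c t3%:Z 1)%Z ->
  [&& (p%:Z %| a)%Z, (p%:Z %| b)%Z & (p%:Z %| c)%Z].
Proof.
move=> pp h1 h2 h3 d12 d13 d23 r1 r2 r3.
have e12 := two_roots pp h1 h2 d12 r1 r2.
have e13 := two_roots pp h1 h3 d13 r1 r3.
have ha : (p%:Z %| a)%Z.
  have : (p%:Z %| a * (t2%:Z - t3%:Z))%Z.
    have -> : a * (t2%:Z - t3%:Z) = (a * (t1%:Z + t2%:Z) + b) - (a * (t1%:Z + t3%:Z) + b) by ring.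
    by rewrite rpredB.
  by rewrite Euclidz // (negbTE (nodvd_diff h2 h3 d23)) orbF.
have hb : (p%:Z %| b)%Z.
  have -> : b = (a * (t1%:Z + t2%:Z) + b) - a * (t1%:Z + t2%:Z) by ring.
  by rewrite rpredB // dvdz_mulr.
by rewrite ha hb (c_of_root ha hb r1).
Qed.

Lemma two_roots_a (p t1 t2 : nat) a b c : prime p -> (t1 < p)%N -> (t2 < p)%N -> t1 != t2 ->
  (p%:Z %| qform a b c t1%:Z 1)%Z -> (p%:Z %| qform a b c t2%:Z 1)%Z -> (p%:Z %| a)%Z ->
  [&& (p%:Z %| a)%Z, (p%:Z %| b)%Z & (p%:Z %| c)%Z].
Proof.
move=> pp h1 h2 d12 r1 r2 ha.
have e12 := two_roots pp h1 h2 d12 r1 r2.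
have hb : (p%:Z %| b)%Z.
  have -> : b = (a * (t1%:Z + t2%:Z) + b) - a * (t1%:Z + t2%:Z) by ring.
  by rewrite rpredB // dvdz_mulr.
by rewrite ha hb (c_of_root ha hb r1).
Qed.

Definition roots (p : nat) a b c : seq nat :=
  filter (fun t : nat => (p%:Z %| qform a b c t%:Z 1)%Z) (iota 0 p).

Lemma mem_roots p a b c t : (t \in roots p a b c) = (t < p)%N && (p%:Z %| qform a b c t%:Z 1)%Z.
Proof. by rewrite /roots mem_filter mem_iota andbC. Qed.

Lemma size_roots p a b c : prime p -> ~~ [&& (p%:Z %| a)%Z, (p%:Z %| b)%Z & (p%:Z %| c)%Z] ->
  (size (roots p a b c) + (p%:Z %| a)%Z <= 2)%N.
Proof.
move=> pp nd.
have uR : uniq (roots p a b c) by apply: filter_uniq; apply: iota_uniq.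
have mR := mem_roots p a b c.
move: uR mR; case: (roots p a b c) => [|t1 [|t2 [|t3 R]]] //=.
- by move=> _ _; case: (_ %| _)%Z.
- by move=> _ _; case: (_ %| _)%Z.
- rewrite !inE andbT => d12 mR.
  case ha: (p%:Z %| a)%Z => //.
  have /andP [h1 r1] : (t1 < p)%N && (p%:Z %| qform a b c t1%:Z 1)%Z by rewrite -mR !inE eqxx.
  have /andP [h2 r2] : (t2 < p)%N && (p%:Z %| qform a b c t2%:Z 1)%Z by rewrite -mR !inE eqxx orbT.
  by rewrite (two_roots_a pp h1 h2 d12 r1 r2 ha) in nd.
- rewrite !inE !negb_or => /and4P [/and3P [d12 d13 _] /andP [d23 _] _ _] mR.
  have /andP [h1 r1] : (t1 < p)%N && (p%:Z %| qform a b c t1%:Z 1)%Z by rewrite -mR !inE eqxx.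
  have /andP [h2 r2] : (t2 < p)%N && (p%:Z %| qform a b c t2%:Z 1)%Z by rewrite -mR !inE eqxx orbT.
  have /andP [h3 r3] : (t3 < p)%N && (p%:Z %| qform a b c t3%:Z 1)%Z by rewrite -mR !inE eqxx !orbT.
  by rewrite (three_roots pp h1 h2 h3 d12 d13 d23 r1 r2 r3) in nd.
Qed.

Definition Tt (p t : nat) : chart := (t%:Z, p%:Z, 1, 0).
Definition Vc (p : nat) : chart := (1, 0, 0, p%:Z).
Definition PPc (p : nat) : chart := (p%:Z, 0, 0, p%:Z).
Definition Idc : chart := (1, 0, 0, 1).
Ltac unf := cbv beta iota delta [ap1 ap2 Idc Vc PPc Tt].
Definition alldiv (p : nat) (a b c : int) := [&& (p%:Z %| a)%Z, (p%:Z %| b)%Z & (p%:Z %| c)%Z].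
Definition cand p a b c := map (Tt p) (roots p a b c) ++ (if (p%:Z %| a)%Z then [:: Vc p] else [::]).
Definition charts p a b c : seq chart :=
  if alldiv p a b c then [:: Idc] else
  if cand p a b c is [::] then [:: PPc p] else cand p a b c.

Lemma In_mem (T : eqType) (x : T) (s : seq T) : List.In x s -> x \in s.
Proof. elim: s => //= y s IH [->|/IH h]; rewrite inE ?eqxx ?h ?orbT //. Qed.

Lemma mem_In (T : eqType) (x : T) (s : seq T) : x \in s -> List.In x s.
Proof. elim: s => //= y s IH; rewrite inE => /orP [/eqP ->|/IH h]; [left|right]; done. Qed.

Lemma in_cand p a b c m : List.In m (cand p a b c) ->
  (exists t, t \in roots p a b c /\ m = Tt p t) \/ ((p%:Z %| a)%Z /\ m = Vc p).
Proof.
rewrite /cand => /List.in_app_iff [/List.in_map_iff [t [<- ht]]|].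
  by left; exists t; split => //; apply: In_mem.
by case: ifP => // ha [<-|[]]; right.
Qed.

Lemma size_charts p a b c : prime p -> (size (charts p a b c) <= 2)%N.
Proof.
move=> pp; rewrite /charts; case: ifP => // nd.
have := size_roots pp (negbT nd).
case e: (cand p a b c) => [|m s] //.
by rewrite -e /cand size_cat size_map; case: (_ %| _)%Z.
Qed.

Lemma charts_ok p a b c m : List.In m (charts p a b c) ->
  forall w1 w2, (p%:Z %| qform a b c (ap1 m w1 w2) (ap2 m w1 w2))%Z.
Proof.
rewrite /charts; case: ifP => [/and3P [ha hb hc] [<-|[]]|nd hm] w1 w2.
  unf.
  have -> : forall x y : int, 1 * x + 0 * y = x by move=> x y; ring.
  have -> : forall x y : int, 0 * x + 1 * y = y by move=> x y; ring.
  exact: qform_dvd.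
have hP : forall w1 w2, (p%:Z %| qform a b c (ap1 (PPc p) w1 w2) (ap2 (PPc p) w1 w2))%Z.
  move=> x y; unf.
  have -> : qform a b c (p%:Z * x + 0 * y) (0 * x + p%:Z * y) = p%:Z * (p%:Z * qform a b c x y)
    by rewrite /qform; ring.
  exact: dvdz_mulr (dvdzz _).
have hC : List.In m (cand p a b c) -> (p%:Z %| qform a b c (ap1 m w1 w2) (ap2 m w1 w2))%Z.
  move=> /in_cand [[t [ht ->]]|[ha ->]].
    move: ht; rewrite mem_roots => /andP [_ hr].
    unf.
    have -> : qform a b c (t%:Z * w1 + p%:Z * w2) (1 * w1 + 0 * w2) =
      (w1 * w1) * qform a b c t%:Z 1 + p%:Z * (2 * a * t%:Z * w1 * w2 + a * p%:Z * (w2 * w2) + b * w1 * w2)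
      by rewrite /qform; ring.
    by apply: rpredD; [exact: dvdz_mull | exact: dvdz_mulr (dvdzz _)].
  unf.
  have -> : qform a b c (1 * w1 + 0 * w2) (0 * w1 + p%:Z * w2) =
      a * (w1 * w1) + p%:Z * (b * w1 * w2 + c * p%:Z * (w2 * w2))
      by rewrite /qform; ring.
  by apply: rpredD; [exact: dvdz_mulr | exact: dvdz_mulr (dvdzz _)].
by move: hm; case e: (cand p a b c) => [|m' s]; [move=> [<-|[]]; apply: hP | rewrite -e; apply: hC].
Qed.

Lemma cover_p p a b c m u1 v1 : ~~ alldiv p a b c -> List.In m (charts p a b c) ->
  exists w1 w2, p%:Z * u1 = ap1 m w1 w2 /\ p%:Z * v1 = ap2 m w1 w2.
Proof.
move=> nd; rewrite /charts (negbTE nd).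
have hP : List.In m [:: PPc p] -> exists w1 w2, p%:Z * u1 = ap1 m w1 w2 /\ p%:Z * v1 = ap2 m w1 w2.
  move=> [<-|[]]; exists u1, v1; unf; split; ring.
have hC : List.In m (cand p a b c) -> exists w1 w2, p%:Z * u1 = ap1 m w1 w2 /\ p%:Z * v1 = ap2 m w1 w2.
  move=> /in_cand [[t [ht ->]]|[ha ->]].
    exists (p%:Z * v1), (u1 - t%:Z * v1); unf; split; ring.
  exists (p%:Z * u1), v1; unf; split; ring.
by case e: (cand p a b c) => [|m' s]; [apply: hP | rewrite -e; apply: hC].
Qed.

Lemma charts_nonnil p a b c : exists m, List.In m (charts p a b c).
Proof.
rewrite /charts; case: ifP => _; first by exists Idc; left.
case: (cand p a b c) => [|m s]; first by exists (PPc p); left.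
by exists m; left.
Qed.

Lemma cand_charts p a b c m : ~~ alldiv p a b c -> List.In m (cand p a b c) -> List.In m (charts p a b c).
Proof.
move=> nd; rewrite /charts (negbTE nd).
by case e: (cand p a b c) => [|m' s].
Qed.

Lemma charts_cover p a b c u v : prime p -> (p%:Z %| qform a b c u v)%Z ->
  exists m, List.In m (charts p a b c) /\ exists w1 w2, u = ap1 m w1 w2 /\ v = ap2 m w1 w2.
Proof.
move=> pp hq.
case nd: (alldiv p a b c).
  exists Idc; split; first by rewrite /charts nd; left.
  by exists u, v; unf; split; ring.
move/negbT: nd => nd.
have p0 : p%:Z != 0 by rewrite eqz_nat -lt0n prime_gt0.
case hv: (p%:Z %| v)%Z.
  have [v1 ev] := dvdzP hv.
  have hau : (p%:Z %| a * u * u)%Z.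
    have -> : a * u * u = qform a b c u v - p%:Z * (b * u * v1 + c * p%:Z * (v1 * v1))
      by rewrite /qform ev; ring.
    by rewrite rpredB // dvdz_mulr.
  case ha: (p%:Z %| a)%Z.
    exists (Vc p); split.
      apply: cand_charts => //; rewrite /cand ha; apply/List.in_app_iff; right; left => //.
    by exists u, v1; unf; rewrite ev; split; ring.
  have hu : (p%:Z %| u)%Z by move: hau; rewrite !Euclidz // ha /= orbb.
  have [u1 eu] := dvdzP hu.
  have [m hm] := charts_nonnil p a b c.
  exists m; split => //.
  have [w1 [w2 [e1 e2]]] := cover_p u1 v1 nd hm.
  by exists w1, w2; rewrite eu ev mulrC e1 mulrC e2.
have [[x y] /= hxy] := coprimezP _ _ (coprimez_prime pp (negbT hv)).
pose t := absz ((u * y) %% p%:Z)%Z.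
have ht : t%:Z = ((u * y) %% p%:Z)%Z by rewrite /t gez0_abs // modz_ge0.
have tp : (t < p)%N by rewrite -ltz_nat ht ltz_pmod // ltz_nat prime_gt0.
pose k := ((u * y) %/ p%:Z)%Z.
have ht' : t%:Z = u * y - k * p%:Z by rewrite ht {2}(divz_eq (u * y) p%:Z) /k; ring.
have eu : u = t%:Z * v + p%:Z * (u * x + k * v).
  rewrite ht'.
  have -> : (u * y - k * p%:Z) * v + p%:Z * (u * x + k * v) = u * (x * p%:Z + y * v) by ring.
  by rewrite hxy mulr1.
have hr : (p%:Z %| qform a b c t%:Z 1)%Z.
  have h2 : (p%:Z %| v * (v * qform a b c t%:Z 1))%Z.
    have -> : v * (v * qform a b c t%:Z 1) =
       qform a b c u v - (u - t%:Z * v) * (a * (u + t%:Z * v) + b * v) by rewrite /qform; ring.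
    rewrite rpredB //.
    have -> : u - t%:Z * v = p%:Z * (u * x + k * v) by rewrite {1}eu; ring.
    by rewrite -mulrA dvdz_mulr.
  by move: h2; rewrite !Euclidz // hv.
exists (Tt p t); split.
  apply: cand_charts => //; rewrite /cand; apply/List.in_app_iff; left.
  by apply: List.in_map; apply: mem_In; rewrite mem_roots tp hr.
by exists v, (u * x + k * v); unf; split; [exact: eu | ring].
Qed.

Lemma main r : (0 < r)%N -> forall a b c, Good r a b c (2 ^ bigOmega r).
Proof.
elim/ltn_ind: r => r IH r0 a b c.
case: (ltngtP 1 r) => [r1| |<-]; last first.
- exists [:: fun _ _ => True]; split; first by rewrite /= expn_gt0.
  split; first by move=> L [<-|[]]; split.
  move=> u v; split; last by move=> _; rewrite dvdzE /= dvd1n.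
  by move=> _; exists (fun _ _ => True); split => //; left.
- by rewrite ltnS leqn0 => /eqP r00; rewrite r00 in r0.
have pp := pdiv_prime r1.
set p := pdiv r in pp *.
have p0 := prime_gt0 pp.
set r' := (r %/ p)%N.
have er : r = (p * r')%N by rewrite /r' mulnC divnK // /p pdiv_dvd.
have r'0 : (0 < r')%N by move: r0; rewrite er muln_gt0 => /andP [].
have r'r : (r' < r)%N by rewrite /r' ltn_Pdiv // prime_gt1.
have IH' := IH r' r'r r'0.
have [s [hs [hl hi]]] := @charts_step p r' (2 ^ bigOmega r') a b c (charts p a b c) p0 IH'
   (@charts_ok p a b c).
exists s; split.
  apply: leq_trans hs _.
  rewrite er bigOmega_mul // expnS leq_mul2r size_charts ?orbT //.
split => // u v.
rewrite -hi er; split; last by case.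
move=> hd; split => //.
apply: charts_cover => //.
apply: dvdz_trans hd.
by rewrite PoszM dvdz_mulr.
Qed.

Lemma size_len T (s : seq T) : size s = length s.
Proof. by elim: s => //= _ s ->. Qed.

Theorem lemma6 (a b c : int) (r : nat) (hr : (0 < r)%N) :
  exists (N : nat) (L : 'I_N -> int -> int -> Prop),
    (N <= 2 ^ bigOmega r)%N /\
    (forall n, is_lattice (L n)) /\
    (forall u v : int,
        (r%:Z %| qform a b c u v)%Z <-> exists n, L n u v).
Proof.
have [s [hs [hl hi]]] := main hr a b c.
exists (size s), (fun n => List.nth (nat_of_ord n) s (fun _ _ => False)).
split => //; split.
  move=> n; apply: hl; apply: List.nth_In.
  apply: (elimT ssrnat.ltP); rewrite -size_len; exact: ltn_ord.
move=> u v; rewrite hi; split.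
  move=> [L [hL Lu]].
  have [n [hn e]] := List.In_nth s L (fun _ _ => False) hL.
  have hn' : (n < size s)%N by rewrite size_len; apply/ssrnat.ltP.
  by exists (Ordinal hn'); rewrite /= e.
move=> [n hn]; exists (List.nth n s (fun _ _ => False)); split => //.
apply: List.nth_In.
apply: (elimT ssrnat.ltP); rewrite -size_len; exact: ltn_ord.
Qed.
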